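(* Let $n\ge2$ and let $\xi_n:S^1\to M_n(\mathbb C)$ be the continuous function whose $(i,j)$ entry ($1\le i,j\le n$) is $\xi_n(z)_{ij}=z^{j-i}$. Then $\xi_n$ is a positive element of $C(S^1)^{(n)}\otimes_{\min}C(S^1)$ which is entangled: there do not exist $k\in\mathbb N$, positive semidefinite Toeplitz matrices $t_1,\dots,t_k\in C(S^1)^{(n)}$ and positive functions $f_1,\dots,f_k\in C(S^1)$ with $\xi_n=\sum_{j=1}^k t_j\otimes f_j$.
   Context: $S^1$ is the unit circle, $C(S^1)$ the C$^*$-algebra of continuous complex functions on it. $C(S^1)^{(n)}\subseteq M_n(\mathbb C)$ is the operator system of Toeplitz matrices $[\tau_{k-\ell}]$. $C(S^1)^{(n)}\otimes_{\min}C(S^1)$ is identified with the continuous functions $S^1\to C(S^1)^{(n)}$, with $t\otimes f$ corresponding to $z\mapsto f(z)t$, and an element is positive iff its value at each $z\in S^1$ is positive semidefinite. A positive element is separable if it is a finite sum of tensors of positive elements, and entangled otherwise. *)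

(* Defs.v *)
From HB Require Import structures.
From mathcomp Require Import all_boot all_order all_algebra.
From mathcomp Require Import reals.
From mathcomp.real_closed Require Import complex.
Set Implicit Arguments. Unset Strict Implicit. Unset Printing Implicit Defensive.
Import Order.TTheory GRing.Theory Num.Theory.
Local Open Scope ring_scope.

Definition S1 {R : realType} (z : R[i]) : Prop := `|z| = 1.

Definition cont_S1 {R : realType} (f : R[i] -> R[i]) : Prop :=
  forall z, S1 z -> forall e : R[i], 0 < e ->
    exists2 d : R[i], 0 < d &
      forall w, S1 w -> `|w - z| < d -> `|f w - f z| < e.

Definition mxcont_S1 {R : realType} (n : nat) (F : R[i] -> 'M[R[i]]_n) : Prop :=
  forall i j : 'I_n, cont_S1 (fun z => F z i j).

Definition toeplitz {R : realType} (n : nat) (A : 'M[R[i]]_n) : Prop :=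
  exists tau : int -> R[i], forall k l : 'I_n, A k l = tau (k%:Z - l%:Z).

Definition psd {R : realType} (n : nat) (A : 'M[R[i]]_n) : Prop :=
  (forall k l : 'I_n, A l k = (A k l)^*) /\
  forall v : 'cV[R[i]]_n,
    0 <= \sum_(k < n) \sum_(l < n) (v k 0)^* * A k l * v l 0.

Definition xi {R : realType} (n : nat) (z : R[i]) : 'M[R[i]]_n :=
  \matrix_(i < n, j < n) z ^ (j%:Z - i%:Z).

(* Main.v *)
Require Import Defs.
From HB Require Import structures.
From mathcomp Require Import all_boot all_order all_algebra.
From mathcomp Require Import reals.
From mathcomp.real_closed Require Import complex.
From mathcomp Require Import ring.
Import Order.TTheory GRing.Theory Num.Theory.
Local Open Scope ring_scope.
Set Implicit Arguments. Unset Strict Implicit.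

Section Gen.
Variable C : numClosedFieldType.
Implicit Types z w : C.

Lemma u_conj z : `|z| = 1 -> z * z^* = 1.
Proof. by move=> h; rewrite -normCK h expr1n. Qed.

Lemma u_neq0 z : `|z| = 1 -> z != 0.
Proof. by move=> h; apply/eqP=> z0; move: h; rewrite z0 normr0 => /eqP; rewrite eq_sym oner_eq0. Qed.

Lemma u_conjV z : `|z| = 1 -> z^* = z^-1.
Proof.
move=> h; have nz := u_neq0 h.
by apply: (mulfI nz); rewrite u_conj // divff.
Qed.

Lemma u_expn z p : `|z| = 1 -> `|z ^+ p| = 1.
Proof. by move=> h; rewrite normrX h expr1n. Qed.

Lemma u_expz z m : `|z| = 1 -> `|z ^ m| = 1.
Proof.
move=> h; case: m => p; first by rewrite -exprnP u_expn.
by rewrite NegzE -exprnN normfV u_expn // invr1.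
Qed.

Lemma conj_expz z m : `|z| = 1 -> (z ^ m)^* = z ^ (- m).
Proof.
move=> h; rewrite rmorphXz; last by rewrite unitfE u_neq0.
by rewrite /= u_conjV // exprz_inv.
Qed.

Lemma bnd_expn z w p : `|z| = 1 -> `|w| = 1 ->
  `|w ^+ p - z ^+ p| <= p%:R * `|w - z|.
Proof.
move=> hz hw; elim: p => [|p IH]; first by rewrite !expr0 subrr normr0 mul0r.
have -> : w ^+ p.+1 - z ^+ p.+1 = w * (w ^+ p - z ^+ p) + (w - z) * z ^+ p.
  by rewrite !exprS; ring.
apply: (le_trans (ler_normD _ _)).
by rewrite !normrM hw u_expn // mul1r mulr1 mulrSr mulrDl mul1r lerD2r.
Qed.

Lemma bnd_expz m : exists N : nat, forall z w : C, `|z| = 1 -> `|w| = 1 ->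
  `|w ^ m - z ^ m| <= N%:R * `|w - z|.
Proof.
case: m => p.
  by exists p => z w hz hw; rewrite -!exprnP bnd_expn.
exists p.+1 => z w hz hw; rewrite NegzE -!exprnN.
have nz := u_neq0 (u_expn p.+1 hz); have nw := u_neq0 (u_expn p.+1 hw).
have -> : (w ^+ p.+1)^-1 - (z ^+ p.+1)^-1 =
   (w ^+ p.+1)^-1 * (z ^+ p.+1 - w ^+ p.+1) * (z ^+ p.+1)^-1.
  by field; rewrite nz nw.
rewrite !normrM !normfV !u_expn // invr1 mul1r mulr1 distrC.
exact: bnd_expn.
Qed.


Lemma sum2 n (i0 i1 : 'I_n) (F : 'I_n -> C) : i0 != i1 ->
  (forall k, k != i0 -> k != i1 -> F k = 0) -> \sum_k F k = F i0 + F i1.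
Proof.
move=> h01 hF; rewrite (bigD1 i0) //= (bigD1 i1) /=; last by rewrite eq_sym.
rewrite big1 ?addr0 // => k /andP[k1 k0]; exact: hF.
Qed.

Lemma key (a b z : C) : 0 <= a -> b * b^* <= a * a -> z * z^* = 1 ->
  2 * a - z^* * b - b^* * z = 0 -> b = a * z.
Proof.
move=> a0 hab hz hc; have ac : a^* = a by rewrite geC0_conj.
have E : (b - a * z) * (b - a * z)^* =
   b * b^* - a * a + a * a * (z * z^* - 1) + a * (2 * a - z^* * b - b^* * z).
  rewrite rmorphB rmorphM /= ac; ring.
rewrite hz hc subrr !mulr0 !addr0 in E.
apply/eqP; rewrite -subr_eq0 -mul_conjC_eq0 E eq_le subr_le0 hab /=.
by rewrite -E mul_conjC_ge0.
Qed.

Lemma psd2 n (A : 'M[C]_n) (i0 i1 : 'I_n) : i0 != i1 ->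
  A i1 i1 = A i0 i0 -> A i1 i0 = (A i0 i1)^* ->
  (forall v : 'cV[C]_n,
    0 <= \sum_(k < n) \sum_(l < n) (v k 0)^* * A k l * v l 0) ->
  forall x y, 0 <= x^* * A i0 i0 * x + x^* * A i0 i1 * y
                 + y^* * (A i0 i1)^* * x + y^* * A i0 i0 * y.
Proof.
move=> h01 h11 h10 hQ x y.
pose v : 'cV[C]_n := \matrix_(k, j) (if k == i0 then x else if k == i1 then y else 0).
have := hQ v.
have vz : forall k, k != i0 -> k != i1 -> v k 0 = 0.
  by move=> k /negbTE k0 /negbTE k1; rewrite mxE k0 k1.
rewrite (sum2 h01); last first.
  by move=> k k0 k1; rewrite big1 // => l _; rewrite vz // rmorph0 !mul0r.
rewrite !(sum2 h01); try by move=> l l0 l1; rewrite (vz l) // mulr0.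
have e10 : (i1 == i0) = false by rewrite eq_sym (negbTE h01).
rewrite !mxE !eqxx ?(negbTE h01) e10 h11 h10 /=.
by rewrite !addrA.
Qed.



Lemma idA (a b : C) : a^* = a ->
  b^* * a * b + b^* * b * - a + (- a)^* * b^* * b + (- a)^* * a * - a
     = a * (a * a - b * b^*).
Proof. move=> ac; rewrite rmorphN /= ac; ring. Qed.

Lemma idB (b : C) :
  b^* * 0 * b + b^* * b * -1 + (-1)^* * b^* * b + (-1)^* * 0 * -1
        = - (2 * (b * b^*)).
Proof. rewrite rmorphN rmorph1; ring. Qed.

Lemma idC (a b z : C) :
  z^* * a * z + z^* * b * (0 - 1) + (0 - 1)^* * b^* * z + (0 - 1)^* * a * (0 - 1)
   = (2 * a - z^* * b - b^* * z) + a * (z * z^* - 1).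
Proof. rewrite rmorphB rmorph0 rmorph1; ring. Qed.

Lemma Qfacts (a b : C) :
  (forall x y, 0 <= x^* * a * x + x^* * b * y + y^* * b^* * x + y^* * a * y) ->
  [/\ 0 <= a, b * b^* <= a * a &
      forall z, `|z| = 1 -> 0 <= 2 * a - z^* * b - b^* * z].
Proof.
move=> hQ.
have a0 : 0 <= a.
  by move: (hQ 1 0); rewrite rmorph1 rmorph0 !(mul0r, mulr0, mul1r, mulr1, addr0, add0r).
have ac : a^* = a by rewrite geC0_conj.
split => //.
  move: a0; rewrite le_eqVlt => /orP[/eqP a0e|apos].
    have := hQ b (-1); rewrite -a0e idB.
    rewrite oppr_ge0 pmulr_rle0 ?ltr0n // mulr0 => ->//.
  have := hQ b (-a); rewrite idA //.
  by rewrite pmulr_rge0 // subr_ge0.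
move=> z hz; have := hQ z (0 - 1); rewrite idC.
by rewrite u_conj // subrr mulr0 addr0.
Qed.

Definition pt (m : nat) : C := (1 + m%:R * 'i) / (1 - m%:R * 'i).

Lemma pt_den m : 1 - m%:R * 'i != 0 :> C.
Proof.
have E : (1 - m%:R * 'i) * (1 + m%:R * 'i) = (1 + m * m)%:R :> C.
  have -> : (1 - m%:R * 'i) * (1 + m%:R * 'i) = 1 - m%:R * m%:R * 'i ^+ 2 :> C by ring.
  by rewrite sqrCi mulrN1 opprK natrD natrM.
apply/negP => /eqP h; move: E; rewrite h mul0r => /eqP; rewrite eq_sym pnatr_eq0.
by [].
Qed.

Lemma pt_norm m : `|pt m| = 1.
Proof.
have E : (1 + m%:R * 'i)^* = 1 - m%:R * 'i :> C.
  by rewrite rmorphD rmorphM rmorph1 /= conjC_nat conjCi mulrN.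
rewrite /pt normf_div -E norm_conjC divff // normr_eq0.
by apply: contra (pt_den m) => /eqP h; rewrite -E h rmorph0.
Qed.

Lemma pt_inj m m' : pt m = pt m' -> m = m'.
Proof.
move=> /eqP; rewrite /pt eqr_div ?pt_den // => /eqP h.
have : 2 * (m%:R - m'%:R) * 'i = 0 :> C.
  rewrite -[RHS](subrr ((1 + m%:R * 'i) * (1 - m'%:R * 'i))) {2}h; ring.
move/eqP; rewrite !mulf_eq0 (negbTE (neq0Ci C)) pnatr_eq0 /= orbF subr_eq0 eqr_nat.
by move/eqP.
Qed.

End Gen.

Theorem proposition7p6 (R : realType) (n : nat) (hn : (2 <= n)%N) :
  (* xi_n is a positive element of C(S^1)^(n) (x)_min C(S^1) *)
  (mxcont_S1 (@xi R n) /\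
   (forall z : R[i], S1 z -> toeplitz (xi n z)) /\
   (forall z : R[i], S1 z -> psd (xi n z))) /\
  (* ... which is entangled *)
  ~ (exists (k : nat) (t : 'I_k -> 'M[R[i]]_n) (f : 'I_k -> R[i] -> R[i]),
        (forall j, toeplitz (t j) /\ psd (t j)) /\
        (forall j, cont_S1 (f j) /\ forall z, S1 z -> 0 <= f j z) /\
        (forall z, S1 z -> xi n z = \sum_(j < k) f j z *: t j)).
Proof.
have n0 : (0 < n)%N by apply: ltnW.
pose i0 : 'I_n := Ordinal n0. pose i1 : 'I_n := Ordinal hn.
have h01 : i0 != i1 by [].
split.
  split; [|split].
  - move=> i j z hz e he.
    have [N hN] := @bnd_expz (R[i]) (j%:Z - i%:Z).
    exists (e / (N.+1)%:R); first by rewrite divr_gt0 // ltr0Sn.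
    move=> w hw hwz; rewrite !mxE; apply: le_lt_trans (hN z w hz hw) _.
    apply: (@le_lt_trans _ _ (N.+1%:R * `|w - z|)).
      by rewrite ler_wpM2r // ler_nat.
    rewrite -(@ltr_pM2l _ (N.+1%:R)^-1) ?invr_gt0 ?ltr0Sn // mulrA mulVf ?pnatr_eq0 //.
    by rewrite mul1r mulrC.
  - move=> z hz; exists (fun d => z ^ (- d)) => k l; rewrite mxE opprB.
    done.
  - move=> z hz; split.
      by move=> k l; rewrite !mxE conj_expz // opprB.
    move=> v.
    have E : forall k l : 'I_n, xi n z k l = (z ^+ k)^* * z ^+ l.
      move=> k l; rewrite mxE expfzDr ?u_neq0 // -conj_expz // -!exprnP mulrC.
      done.
    pose S := \sum_(l < n) z ^+ l * v l 0.
    have -> : \sum_(k < n) \sum_(l < n) (v k 0)^* * xi n z k l * v l 0 = S^* * S.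
      rewrite rmorph_sum mulr_suml; apply: eq_bigr => k _.
      rewrite mulr_sumr; apply: eq_bigr => l _; rewrite E rmorphM /=; ring.
    by rewrite mulrC mul_conjC_ge0.
move=> [k [t [f [Ht [Hf Hx]]]]].
pose a j := t j i0 i0; pose b j := t j i0 i1.
have HQ : forall j, [/\ 0 <= a j, b j * (b j)^* <= a j * a j &
    forall z, `|z| = 1 -> 0 <= 2 * a j - z^* * b j - (b j)^* * z].
  move=> j; apply: Qfacts; have [[tau Htau] [Hh Hq]] := Ht j.
  have h11 : t j i1 i1 = t j i0 i0 by rewrite !Htau.
  have h10 : t j i1 i0 = (t j i0 i1)^* by rewrite Hh.
  exact: (psd2 h01 h11 h10 Hq).
have Hent : forall z, `|z| = 1 -> forall r s, xi n z r s = \sum_j f j z * t j r s.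
  move=> z hz r s; rewrite (Hx z hz) summxE; apply: eq_bigr => j _; rewrite mxE.
  done.
have Hsa : forall z, `|z| = 1 -> 1 = \sum_j f j z * a j.
  move=> z hz; have := Hent z hz i0 i0; rewrite mxE subrr expr0z.
  done.
have Hsum : forall z, `|z| = 1 -> forall j, f j z != 0 -> b j = a j * z.
  move=> z hz.
  have sb : z = \sum_j f j z * b j.
    have := Hent z hz i0 i1; rewrite mxE.
    have -> : (i1 : nat)%:Z - (i0 : nat)%:Z = 1 by [].
    by rewrite expr1z.
  have fc : forall j, (f j z)^* = f j z by move=> j; rewrite geC0_conj // (Hf j).2.
  have sbc : z^* = \sum_j f j z * (b j)^*.
    by rewrite {1}sb rmorph_sum; apply: eq_bigr => j _; rewrite rmorphM /= fc.
  have S0 : \sum_j f j z * (2 * a j - z^* * b j - (b j)^* * z) = 0.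
    have -> : \sum_j f j z * (2 * a j - z^* * b j - (b j)^* * z) =
       2 * (\sum_j f j z * a j) - z^* * (\sum_j f j z * b j)
         - z * (\sum_j f j z * (b j)^*).
      rewrite !mulr_sumr -!sumrB; apply: eq_bigr => j _; ring.
    rewrite -Hsa // -sb -sbc (mulrC z^* z) u_conj //.
    ring.
  move=> j fj; case: (HQ j) => a0 hab hc.
  apply: key a0 hab (u_conj hz) _.
  have hge : forall i : 'I_k, true -> 0 <= f i z * (2 * a i - z^* * b i - (b i)^* * z).
    by move=> i _; case: (HQ i) => _ _ hci; apply: mulr_ge0; [exact: (Hf i).2 | exact: hci].
  have := psumr_eq0P hge S0 (i := j) isT.
  by move/eqP; rewrite mulf_eq0 (negbTE fj) => /eqP.
have hex : forall m : 'I_k.+1, exists j : 'I_k, f j (@pt (R[i]) m) * a j != 0.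
  move=> m; have hz := @pt_norm (R[i]) m.
  apply/existsP; apply: contraT => /existsPn hn0.
  have : \sum_j f j (@pt (R[i]) m) * a j = 0.
    by apply: big1 => j _; apply/eqP; have := hn0 j; rewrite negbK.
  by rewrite -Hsa // => /eqP; rewrite oner_eq0.
have [g hg] := fin_all_exists hex.
have ginj : injective g.
  move=> m m' e; have h1 := hg m; have h2 := hg m'; rewrite e in h1.
  rewrite mulf_eq0 negb_or in h1; rewrite mulf_eq0 negb_or in h2.
  case/andP: h1 => f1 a1; case/andP: h2 => f2 _.
  have := Hsum _ (@pt_norm (R[i]) m) _ f1.
  rewrite (Hsum _ (@pt_norm (R[i]) m') _ f2) => /(mulfI a1) /pt_inj.
  by move=> /val_inj.
by have := leq_card _ ginj; rewrite !card_ord ltnn.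
Qed.
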